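(* Let $\Omega$ be a metrizable separable space, $\mathcal{P}$ a weakly relatively compact set of Borel probability measures on $\Omega$, $1\le p<\infty$, and $c_p=c_{p,\mathcal{P}}$. Then: (i) for every non-negative bounded lower semicontinuous function $g$ on $\Omega$, $c_p(g)=\sup_{Q\in\mathcal{P}}E_Q(g^p)^{1/p}$; (ii) for every Borel function $f$ on $\Omega$, $\sup_{Q\in\mathcal{P}}E_Q(|f|^p)^{1/p}\le c_p(f)$.
   Context: $c_{p,\mathcal{P}}(f)=\sup_{P\in\mathcal{P}}E_P(|f|^p)^{1/p}$ for $f\in\mathcal{C}_b(\Omega)$, extended to all real functions by $c(f)=\sup\{c(\varphi):\varphi\in\mathcal{C}_b(\Omega),0\le\varphi\le f\}$ for $f\ge0$ lower semicontinuous and $c(g)=\inf\{c(f):f\text{ l.s.c.},f\ge|g|\}$ for arbitrary $g$. Weak relative compactness refers to the topology on probability measures making $\mu\mapsto\int f\,d\mu$ continuous for all $f\in\mathcal{C}_b(\Omega)$. *)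

(* Defs.v *)
From HB Require Import structures.
From mathcomp Require Import all_boot all_order all_algebra.
From mathcomp Require Import all_classical all_reals all_analysis.
Set Implicit Arguments. Unset Strict Implicit. Unset Printing Implicit Defensive.
Import Order.TTheory GRing.Theory Num.Theory.
Import numFieldNormedType.Exports.
Local Open Scope classical_set_scope.
Local Open Scope ring_scope.

Section Capacity.
Variables (R : realType) (Omega : pseudoPMetricType R).

Definition Borel := g_sigma_algebraType (@open Omega).

(* metrizable: the topology of Omega comes from a pseudometric, and it is Hausdorff *)
Definition metrizable_separable : Prop :=
  hausdorff_space Omega /\ exists D : set Omega, countable D /\ dense D.

Definition Cb (f : Omega -> R) : Prop :=
  continuous f /\ exists M : R, forall x, `|f x| <= M.

(* weak topology on probability measures: initial topology of
   mu |-> (f |-> int f dmu), f ranging over C_b (other coordinates are 0) *)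
Definition weak_emb (mu : probability Borel R) : {ptws (Omega -> R) -> R} :=
  fun f => if pselect (Cb f) then Rintegral mu setT (f : Borel -> R) else 0.

(* relative compactness in the weak topology on the space of probability
   measures: the closure (in that space) of P is compact *)
Definition weakly_relatively_compact (P : set (probability Borel R)) : Prop :=
  compact (closure (weak_emb @` P) `&` range weak_emb).

Variable p : R.

Definition Enorm (Q : probability Borel R) (f : Omega -> R) : \bar R :=
  ((\int[Q]_x ((`|f x| `^ p)%:E : \bar R)) `^ p^-1)%E.

Variable P : set (probability Borel R).

Definition cp_Cb (f : Omega -> R) : \bar R := ereal_sup [set Enorm Q f | Q in P].

Definition lsc (f : Omega -> R) : Prop :=
  lower_semicontinuous (fun x => (f x)%:E : \bar R).

Definition cp_lsc (f : Omega -> R) : \bar R :=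
  ereal_sup [set cp_Cb phi | phi in [set phi | Cb phi /\ forall x, 0 <= phi x <= f x]].

Definition cp (g : Omega -> R) : \bar R :=
  ereal_inf [set cp_lsc f | f in [set f | lsc f /\ forall x, `|g x| <= f x]].

End Capacity.

(* Main.v *)
Require Import Defs.
From HB Require Import structures.
From mathcomp Require Import all_boot all_order all_algebra.
From mathcomp Require Import all_classical all_reals all_analysis.
From mathcomp Require Import lra measurable_realfun.
Import Order.TTheory GRing.Theory Num.Theory.
Import numFieldNormedType.Exports.
Local Open Scope classical_set_scope.
Local Open Scope ring_scope.

Section S.
Variables (R : realType) (Omega : pseudoPMetricType R).

Lemma mle_l (x y : \bar R) : (mine x y <= x)%E. Proof. by rewrite ge_min lexx. Qed.
Lemma mle_r (x y : \bar R) : (mine x y <= y)%E. Proof. by rewrite ge_min lexx orbT. Qed.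

Lemma minE_r (x y : \bar R) : (y <= x)%E -> mine x y = y. Proof. exact: min_r. Qed.
Lemma minE_l (x y : \bar R) : (x <= y)%E -> mine x y = x. Proof. exact: min_l. Qed.

Definition dl (x y : Omega) : R := fine (mine (edist (x, y)) 1%:E).

Lemma dl_fin x y : mine (edist (x, y)) 1%:E = (dl x y)%:E.
Proof.
rewrite /dl fineK //; rewrite ge0_fin_numE; last by rewrite le_min edist_ge0 lee01.
by rewrite (le_lt_trans (mle_r _ _)) ?ltey.
Qed.

Lemma dl_ge0 x y : 0 <= dl x y.
Proof. by rewrite -lee_fin -dl_fin le_min edist_ge0 lee01. Qed.

Lemma dl_le1 x y : dl x y <= 1.
Proof. by rewrite -lee_fin -dl_fin mle_r. Qed.

Lemma dl_refl x : dl x x = 0.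
Proof. by apply/eqP; rewrite -(@eqe R) -dl_fin edist_refl min_l ?lee01. Qed.

Lemma dl_sym x y : dl x y = dl y x.
Proof. by rewrite /dl edist_sym. Qed.

Lemma min1_tri (a b c : \bar R) : (0 <= a)%E -> (0 <= b)%E -> (c <= a + b)%E ->
  (mine c 1%:E <= mine a 1%:E + mine b 1%:E)%E.
Proof.
move=> a0 b0 cab.
have [h1|h1] := leP 1%:E a.
  by rewrite (le_trans (mle_r _ _)) // leeDl // le_min b0 lee01.
have [h2|h2] := leP 1%:E b.
  by rewrite (le_trans (mle_r _ _)) // leeDr // le_min (ltW a0') lee01.
exact: le_trans (mle_l _ _) cab.
Qed.

Lemma dl_triangle x y z : dl x z <= dl x y + dl y z.
Proof.
rewrite -lee_fin EFinD -!dl_fin.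
exact: min1_tri (edist_ge0 _) (edist_ge0 _) (edist_triangle _ _ _).
Qed.

Lemma dl_ball x y r : dl x y < r -> r <= 1 -> ball x r y.
Proof.
move=> dr r1; apply: (@edist_lt_ball _ _ _ (x, y)).
have : (mine (edist (x, y)) 1%:E < r%:E)%E by rewrite dl_fin lte_fin.
rewrite gt_min => /orP[//|]; rewrite lte_fin => /(le_lt_trans r1); rewrite ltxx.
by [].
Qed.

Lemma ball_dl x y r : 0 < r -> ball x r y -> dl x y <= r.
Proof.
move=> r0 bxy; rewrite -lee_fin -dl_fin (le_trans (mle_l _ _)) //.
exact: (@edist_fin _ _ _ (x, y)).
Qed.

Lemma cvg_nd_sup (u : nat -> R) L : {homo u : n m / (n <= m)%N >-> n <= m} ->
  (forall n, u n <= L) -> (forall b, b < L -> exists n, b < u n) ->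
  u n @[n --> \oo] --> L.
Proof.
move=> nd uL ap; apply/cvgrPdist_le => e e0.
have [N hN] : exists n, L - e < u n by apply: ap; rewrite ltrBlDl ltrDr.
near=> n; have Nn : (N <= n)%N by near: n; exists N.
move: (nd _ _ Nn) (uL n) => _ _.
rewrite ler_norml; apply/andP; split.
  by apply: (@le_trans _ _ 0); [rewrite oppr_le0 ltW | rewrite subr_ge0].
rewrite lerBlDr -lerBlDl ltW // (lt_le_trans hN) //.
exact: nd.
Unshelve. all: end_near.
Qed.

Section approx.
Variables (h : Omega -> R).
Hypothesis h0 : forall x, 0 <= h x.
Hypothesis hl : lsc h.

Definition Fb (n : nat) (x : Omega) : R :=
  inf [set h y + n%:R * dl x y | y in [set: Omega]].

Lemma Fb_lb n x : has_lbound [set h y + n%:R * dl x y | y in [set: Omega]].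
Proof.
exists 0 => _ [y _ <-]; by rewrite addr_ge0 // mulr_ge0 // dl_ge0.
Qed.

Lemma Fb_le n x y : Fb n x <= h y + n%:R * dl x y.
Proof. by apply: ge_inf (Fb_lb n x) _ _; exists y. Qed.

Lemma Fb_ne n x : [set h y + n%:R * dl x y | y in [set: Omega]] !=set0.
Proof. by exists (h x + n%:R * dl x x), x. Qed.

Lemma Fb_ge0 n x : 0 <= Fb n x.
Proof.
apply: lb_le_inf (Fb_ne n x) _ => _ [y _ <-].
by rewrite addr_ge0 // mulr_ge0 // dl_ge0.
Qed.

Lemma Fb_leh n x : Fb n x <= h x.
Proof. by have := Fb_le n x x; rewrite dl_refl mulr0 addr0. Qed.

Lemma Fb_lip n x x' : Fb n x <= Fb n x' + n%:R * dl x x'.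
Proof.
rewrite -lerBlDr; apply: lb_le_inf (Fb_ne n x') _ => _ [y _ <-].
rewrite lerBlDr (le_trans (Fb_le n x y)) // -addrA lerD2l -mulrDr.
by rewrite ler_wpM2l // addrC dl_triangle.
Qed.

Lemma Fb_cont n : continuous (Fb n).
Proof.
move=> x; apply/cvgrPdist_le => e e0.
have r0 : 0 < e / n.+1%:R by rewrite divr_gt0.
near=> z.
have bz : ball x (e / n.+1%:R) z by near: z; exact: nbhsx_ballx.
have dz := ball_dl _ _ _ r0 bz.
have ne : n%:R * dl x z <= e.
  by rewrite (le_trans (ler_wpM2l _ dz)) // mulrA ler_pdivrMr ?ltr0Sn // mulrC ler_pM2l // ler_nat leqnSn.
have h1 := Fb_lip n z x; have h2 := Fb_lip n x z; rewrite dl_sym in h1.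
rewrite ler_norml; apply/andP; split; lra.
Unshelve. all: end_near.
Qed.

Lemma Fb_nd x : {homo Fb ^~ x : m n / (m <= n)%N >-> m <= n}.
Proof.
move=> m n mn; apply: lb_le_inf (Fb_ne n x) _ => _ [y _ <-].
rewrite (le_trans (Fb_le m x y)) // lerD2l ler_wpM2r ?dl_ge0 //.
by rewrite ler_nat.
Qed.

Lemma Fb_big x a : a < h x -> exists n, a <= Fb n x.
Proof.
move=> ahx.
have [V Vx Va] := @hl x a (ltac:(by rewrite lte_fin)).
move/nbhs_ballP : Vx => [r r0 rV].
pose r' := Num.min r 1.
have r'0 : 0 < r' by rewrite lt_min r0 ltr01.
exists (Num.trunc (a / r')).+1.
apply: lb_le_inf (Fb_ne _ x) _ => _ [y _ <-].
have [dlt|dge] := ltP (dl x y) r'.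
  have bxy : ball x r' y by apply: dl_ball => //; rewrite ge_min lexx orbT.
  have Vy : V y by apply: rV; apply: (le_ball (e1:=r')) bxy; rewrite ge_min lexx.
  have := Va y Vy; rewrite lte_fin => ayh.
  rewrite ltW // (lt_le_trans ayh) // lerDl mulr_ge0 ?dl_ge0 //.
set N := (Num.trunc (a / r')).+1.
have t1 : a <= N%:R * r' by rewrite -ler_pdivrMr // ltW // truncnS_gt.
have t2 : N%:R * r' <= N%:R * dl x y by rewrite ler_wpM2l.
have := h0 y; lra.
Qed.

Definition psi (n : nat) (x : Omega) : R := Num.min (Fb n x) n%:R.

Lemma psi_ge0 n x : 0 <= psi n x.
Proof. by rewrite /psi le_min Fb_ge0 ?ler0n. Qed.

Lemma psi_leh n x : psi n x <= h x.
Proof. by rewrite /psi ge_min Fb_leh. Qed.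

Lemma psi_nd x : {homo psi ^~ x : m n / (m <= n)%N >-> m <= n}.
Proof.
by move=> m n mn; rewrite /psi le_min2 // ?Fb_nd // ler_nat.
Qed.

Lemma psi_Cb n : Cb (psi n).
Proof.
split.
  move=> x; apply: continuous_min; first exact: Fb_cont.
  exact: cst_continuous.
exists n%:R => x; rewrite ger0_norm ?psi_ge0 //.
by rewrite /psi ge_min lexx orbT.
Qed.

Lemma psi_cvg x : psi n x @[n --> \oo] --> h x.
Proof.
apply: cvg_nd_sup; [exact: psi_nd | move=> n; exact: psi_leh|].
move=> b bh.
have [n1 hn1] := @Fb_big x _ (midf_lt bh).2.
exists (maxn n1 (Num.trunc b).+1).
rewrite /psi lt_min; apply/andP; split.
  rewrite (lt_le_trans (midf_lt bh).1) // (le_trans hn1) // Fb_nd //.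
  exact: leq_maxl.
rewrite (lt_le_trans (truncnS_gt b)) // ler_nat; exact: leq_maxr.
Qed.

End approx.

Lemma lsc_meas (h : Omega -> R) : lsc h ->
  measurable_fun [set: Borel Omega] (h : Borel Omega -> R).
Proof.
move=> hl; apply: (@measurability _ _ _ _ _ _ (@RGenOInfty.G R)); first exact: RGenOInfty.measurableE.
move=> _ [_ [x ->] <-]; rewrite setTI.
apply: sub_sigma_algebra.
have := (lower_semicontinuousP _).1 hl x.
congr open; apply/seteqP; split => y /=; rewrite in_itv /= andbT lte_fin //.
Qed.

Lemma cont_lsc (f : Omega -> R) : continuous f -> lsc f.
Proof.
move=> cf x a; rewrite lte_fin => afx.
exists (f @^-1` [set y | a < y]); first exact: (cf x _ (lt_nbhsr afx)).
by move=> y /=; rewrite lte_fin.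
Qed.

Lemma meas_pow (f : Omega -> R) (p : R) : lsc f ->
  measurable_fun [set: Borel Omega] (fun x : Borel Omega => ((f x) `^ p)%:E).
Proof.
move=> fl; apply/measurable_EFinP.
have H1 : measurable_fun [set: R] (fun y : R => y `^ p) := measurable_powR p. exact: (measurableT_comp H1 (lsc_meas _ fl)).
Qed.

Section integ.
Variables (p : R) (p0 : 0 < p).
Variable (P : set (probability (Borel Omega) R)).

Lemma psi_big (h : Omega -> R) (h0 : forall x, 0 <= h x) (hl : lsc h) x b :
  b < h x -> exists n, b < psi h n x.
Proof.
move=> bh.
have [n1 hn1] := @Fb_big h h0 hl x _ (midf_lt bh).2.
exists (maxn n1 (Num.trunc b).+1).
rewrite /psi lt_min; apply/andP; split.
  rewrite (lt_le_trans (midf_lt bh).1) // (le_trans hn1) // Fb_nd //.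
  exact: leq_maxl.
rewrite (lt_le_trans (truncnS_gt b)) // ler_nat; exact: leq_maxr.
Qed.

Lemma powp_cvg (h : Omega -> R) (h0 : forall x, 0 <= h x) (hl : lsc h) x :
  (psi h n x) `^ p @[n --> \oo] --> (h x) `^ p.
Proof.
apply: cvg_nd_sup.
- move=> m n mn; apply: ge0_ler_powR; rewrite ?nnegrE ?psi_ge0 //; first exact: ltW.
  exact: psi_nd.
- move=> n; apply: ge0_ler_powR; rewrite ?nnegrE ?psi_ge0 ?h0 //; first exact: ltW.
  exact: psi_leh.
move=> b bh.
have [b0|b0] := ltP b 0.
  by exists 0%N; apply: (lt_le_trans b0); exact: powR_ge0.
have ah : b `^ p^-1 < h x.
  rewrite ltNge; apply/negP => hle.
  have := ge0_ler_powR (ltW p0) (x := h x) (y := b `^ p^-1).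
  rewrite !nnegrE h0 powR_ge0 => /(_ isT isT hle).
  by rewrite -powRrM mulVf ?gt_eqF // powRr1 // leNgt bh.
have [n hn] := @psi_big h h0 hl x _ ah.
exists n; rewrite -[X in X < _](@powRr1 _ b) // -(@mulVf _ p (lt0r_neq0 p0)) powRrM.
by apply: gt0_ltr_powR; rewrite ?nnegrE ?powR_ge0 ?psi_ge0.
Qed.


Lemma inv_pK (x : \bar R) : (0 <= x)%E -> ((x `^ p^-1) `^ p = x)%E.
Proof.
by move=> x0; rewrite -poweRrM mulVf ?lt0r_neq0 // poweRe1.
Qed.

Lemma pK_inv (x : \bar R) : (0 <= x)%E -> ((x `^ p) `^ p^-1 = x)%E.
Proof.
by move=> x0; rewrite -poweRrM mulfV ?lt0r_neq0 // poweRe1.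
Qed.

Lemma poweR_mono (r : R) (x y : \bar R) : 0 <= r -> (0 <= x)%E -> (x <= y)%E ->
  (x `^ r <= y `^ r)%E.
Proof.
move=> r0 x0 xy; apply: gt0_ler_poweR => //; rewrite in_itv /= leey andbT //.
exact: le_trans xy.
Qed.

Lemma key (h : Omega -> R) (h0 : forall x, 0 <= h x) (hl : lsc h)
  (Q : probability (Borel Omega) R) : P Q ->
  ((\int[Q]_x (((h x) `^ p)%:E)) `^ p^-1 <= cp_lsc p P h)%E.
Proof.
move=> PQ.
set S := cp_lsc p P h.
have En n : (Enorm p Q (psi h n) <= S)%E.
  apply: ereal_sup_ge; exists (cp_Cb p P (psi h n)).
    exists (psi h n) => //; split; first exact: psi_Cb.
    by move=> x; apply/andP; split; [exact: psi_ge0 | exact: psi_leh].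
  by apply: ereal_sup_ge; exists (Enorm p Q (psi h n)) => //; exists Q.
have S0 : (0 <= S)%E by apply: le_trans (En 0%N); exact: poweR_ge0.
pose I n := (\int[Q]_x ((psi h n x) `^ p)%:E)%E.
have I0 n : (0 <= I n)%E by apply: integral_ge0 => x _; rewrite lee_fin powR_ge0.
have IS n : (I n <= S `^ p)%E.
  have EI : Enorm p Q (psi h n) = (I n `^ p^-1)%E.
    rewrite /Enorm; congr (_ `^ _)%E; apply: eq_integral => x _.
    by rewrite ger0_norm ?psi_ge0.
  rewrite -(inv_pK _ (I0 n)); apply: poweR_mono; first exact: ltW.
    exact: poweR_ge0.
  by rewrite -EI.
have mps n : measurable_fun [set: Borel Omega]
    (fun x : Borel Omega => ((psi h n x) `^ p)%:E).
  by apply: meas_pow; apply: cont_lsc; case: (@psi_Cb h h0 n).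
have ndI : {homo I : m n / (m <= n)%N >-> (m <= n)%E}.
  move=> m n mn; apply: ge0_le_integral => //.
  - by move=> x _; rewrite lee_fin powR_ge0.
  - move=> x _; rewrite lee_fin; apply: ge0_ler_powR; rewrite ?nnegrE ?psi_ge0 //.
      exact: ltW.
    exact: psi_nd.
have -> : (\int[Q]_x ((h x) `^ p)%:E)%E =
    (\int[Q]_x limn (fun n => ((psi h n x) `^ p)%:E))%E.
  apply: eq_integral => x _; apply/esym/cvg_lim => //.
  apply: cvg_EFin; first by near=> n.
  exact: powp_cvg.
rewrite (monotone_convergence _ _ _ _ _) //; first last.
- move=> x _ m n mn; rewrite lee_fin; apply: ge0_ler_powR; rewrite ?nnegrE ?psi_ge0 //.
    exact: ltW.
  exact: psi_nd.
- by move=> n x _; rewrite lee_fin powR_ge0.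
rewrite -[X in (_ <= X)%E](pK_inv _ S0); apply: poweR_mono.
- by rewrite invr_ge0 ltW.
- by apply: lime_ge; [exact: ereal_nondecreasing_is_cvgn | near=> n; exact: I0].
apply: lime_le; first exact: ereal_nondecreasing_is_cvgn.
by near=> n; exact: IS.
Unshelve. all: end_near.
Qed.


Lemma part1 (g : Omega -> R) : (forall x, 0 <= g x) -> lsc g ->
  cp_lsc p P g =
  ereal_sup [set ((\int[Q]_x (((g x) `^ p)%:E : \bar R)) `^ p^-1)%E | Q in P].
Proof.
move=> g0 gl; apply/eqP; rewrite eq_le; apply/andP; split; last first.
  by apply/ereal_supP => _ [Q PQ <-]; exact: key.
apply/ereal_supP => _ [phi [Cphi phig] <-].
apply/ereal_supP => _ [Q PQ <-].
apply: ereal_sup_ge; exists ((\int[Q]_x (((g x) `^ p)%:E : \bar R)) `^ p^-1)%E.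
  by exists Q.
rewrite /Enorm; apply: poweR_mono.
- by rewrite invr_ge0 ltW.
- by apply: integral_ge0 => x _; rewrite lee_fin powR_ge0.
apply: ge0_le_integral => //.
- apply: meas_pow; apply: cont_lsc => x.
  by apply: continuous_comp; [exact: Cphi.1 | exact: norm_continuous].
- exact: meas_pow.
move=> x _; rewrite lee_fin; apply: ge0_ler_powR; rewrite ?nnegrE //.
- exact: ltW.
by have /andP[a b] := phig x; rewrite ger0_norm.
Qed.

Lemma part2 (f : Omega -> R) :
  measurable_fun [set: Borel Omega] (f : Borel Omega -> R) ->
  (ereal_sup [set Enorm p Q f | Q in P] <= cp p P f)%E.
Proof.
move=> mf; apply/ereal_supP => _ [Q PQ <-].
apply/ereal_infP => _ [h [hl fh] <-].
have h0 x : 0 <= h x by apply: le_trans (fh x).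
apply: le_trans (@key h h0 hl Q PQ).
rewrite /Enorm; apply: poweR_mono.
- by rewrite invr_ge0 ltW.
- by apply: integral_ge0 => x _; rewrite lee_fin powR_ge0.
apply: ge0_le_integral => //.
- apply/measurable_EFinP.
  have H1 : measurable_fun [set: R] (fun y : R => y `^ p) := measurable_powR p.
  have H2 : measurable_fun [set: R] (@Num.norm _ R) := @normr_measurable R setT.
  have H3 := measurableT_comp H2 mf.
  exact: (measurableT_comp H1 H3).
- exact: meas_pow.
move=> x _; rewrite lee_fin; apply: ge0_ler_powR; rewrite ?nnegrE //.
exact: ltW.
Qed.

End integ.
End S.

Theorem proposition4p4 (R : realType) (Omega : pseudoPMetricType R)
  (P : set (probability (Borel Omega) R)) (p : R) :
  metrizable_separable Omega ->
  weakly_relatively_compact P ->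
  1 <= p ->
  (forall g : Omega -> R,
      (forall x, 0 <= g x) -> (exists M : R, forall x, g x <= M) -> lsc g ->
      cp_lsc p P g =
      ereal_sup [set ((\int[Q]_x (((g x) `^ p)%:E : \bar R)) `^ p^-1)%E | Q in P])
  /\
  (forall f : Omega -> R,
      measurable_fun [set: Borel Omega] (f : Borel Omega -> R) ->
      (ereal_sup [set Enorm p Q f | Q in P] <= cp p P f)%E).
Proof.
move=> _ _ p1; have p0 : 0 < p by apply: lt_le_trans p1.
split.
  by move=> g g0 _ gl; exact: part1.
by move=> f mf; exact: part2.
Qed.
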